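(* Let $\mathbb{X}$ be a real Banach space such that $(x,x)$ is a CPP for every $x\in S_{\mathbb{X}}$. Then $\mathbb{X}$ is strictly convex.
   Context: $\mathbb{X}$ has dimension greater than $1$. $B(x,r)=\{u:\|u-x\|<r\}$. $x\perp_B y$ means $\|x+\lambda y\|\ge\|x\|$ for all real $\lambda$; $x^\perp=\{y:x\perp_By\}$. For $x,y\in S_{\mathbb{X}}$, $(x,y)$ is a CPP if there exist $r>0,\mu>0$ such that for all $z\in x^\perp\cap S_{\mathbb{X}}$, all $w\in y^\perp\cap S_{\mathbb{X}}$ and all $a,b\in\mathbb{R}$, $ax+bz\in B(x,r)\cap S_{\mathbb{X}}$ implies $\|ay+b\mu w\|\le1$. *)

(* Defs.v *)
From HB Require Import structures.
From mathcomp Require Import all_boot all_order all_algebra.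
From mathcomp Require Import all_classical all_reals all_analysis.
Set Implicit Arguments. Unset Strict Implicit. Unset Printing Implicit Defensive.
Import Order.TTheory GRing.Theory Num.Theory.
Import numFieldNormedType.Exports.
Local Open Scope ring_scope.
Local Open Scope classical_set_scope.

Definition oball {R : realType} {V : normedModType R} (x : V) (r : R) : set V :=
  [set u | `|u - x| < r].

Definition usphere {R : realType} {V : normedModType R} : set V :=
  [set u | `|u| = 1].

Definition bj_orth {R : realType} {V : normedModType R} (x y : V) : Prop :=
  forall l : R, `|x| <= `|x + l *: y|.

Definition bj_perp {R : realType} {V : normedModType R} (x : V) : set V :=
  [set y | bj_orth x y].

Definition CPP {R : realType} {V : normedModType R} (x y : V) : Prop :=
  exists r : R, exists mu : R, 0 < r /\ 0 < mu /\
    forall z, z \in bj_perp x `&` usphere ->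
    forall w, w \in bj_perp y `&` usphere ->
    forall a b : R, a *: x + b *: z \in oball x r `&` usphere ->
      `|a *: y + b *: (mu *: w)| <= 1.

Definition dim_gt1 {R : realType} (V : normedModType R) : Prop :=
  exists x y : V, forall a b : R, a *: x + b *: y = 0 -> a = 0 /\ b = 0.

Definition strictly_convex {R : realType} (V : normedModType R) : Prop :=
  forall x y : V, `|x| = 1 -> `|y| = 1 -> x <> y ->
    forall t : R, 0 < t -> t < 1 -> `|t *: x + (1 - t) *: y| < 1.

(* Main.v *)
Require Import Defs.
From HB Require Import structures.
From mathcomp Require Import all_boot all_order all_algebra.
From mathcomp Require Import all_classical all_reals all_analysis.
From mathcomp Require Import ring lra.
Import Order.TTheory GRing.Theory Num.Theory.
Import numFieldNormedType.Exports.
Local Open Scope ring_scope.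

Lemma vec_id (R : realType) (V : normedModType R) (x y : V) (t : R) :
 t *: x + (1 - t) *: y + (1 - t) *: (x - y) = x /\ t *: x + (1 - t) *: y + (- t) *: (x - y) = y.
Proof.
split.
  rewrite scalerBr addrA addrAC addrK -scalerDl addrCA subrr addr0 scale1r //.
rewrite scaleNr scalerBr opprB addrA addrC addrA addKr -scalerDl subrK scale1r //.
Qed.

Lemma key (R : realType) (V : normedModType R) (p z : V) (al be : R) :
  `|z| = 1 -> 0 < al -> 0 < be -> 1 <= `|p| ->
  `|p + al *: z| <= 1 -> `|p + (- be) *: z| <= 1 ->
  (forall u : V, `|u| = 1 -> CPP u u) -> False.
Proof.
move=> nz al0 be0 p1 hal hbe hcpp.
pose g (s : R) := `|p + s *: z|.
have conv : forall A C B, A <= C -> C <= B ->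
    (B - A) * g C <= (B - C) * g A + (C - A) * g B.
  move=> A C B hAC hCB; rewrite /g.
  have -> : (B - A) * `|p + C *: z| = `|(B - A) *: (p + C *: z)|.
    by rewrite normrZ ger0_norm // subr_ge0 (le_trans hAC).
  have -> : (B - A) *: (p + C *: z) = (B - C) *: (p + A *: z) + (C - A) *: (p + B *: z).
    rewrite !scalerDr !scalerA addrACA -!scalerDl.
    congr (_ *: _ + _ *: _); ring.
  apply: le_trans (ler_normD _ _) _.
  by rewrite !normrZ !ger0_norm ?subr_ge0.
have g0 : g 0 = `|p| by rewrite /g scale0r addr0.
have gal : g al <= 1 by [].
have gbe : g (- be) <= 1 by [].
have gp : g 0 <= 1.
  have := conv (- be) 0 al; rewrite !subr0 sub0r opprK => /(_ _ _).
  move=> /(_ ltac:(lra) ltac:(lra)) h; nra.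
have ge1 : forall s, 1 <= g s.
  move=> s; case: (lerP 0 s) => hs.
  - have := conv (- be) 0 s; rewrite !subr0 sub0r opprK.
    move=> /(_ ltac:(lra) hs) h; nra.
  - have := conv s 0 al; rewrite !subr0 sub0r.
    move=> /(_ ltac:(lra) ltac:(lra)) h; nra.
have gS : forall s t, g s <= g t + `|s - t|.
  move=> s t; rewrite /g.
  have -> : p + s *: z = (p + t *: z) + (s - t) *: z.
    by rewrite -addrA -scalerDl addrCA subrr addr0.
  by apply: le_trans (ler_normD _ _) _; rewrite normrZ nz mulr1.
pose T := fun s : R => 0 <= s /\ g s <= 1.
have hT : has_sup T.
  split; first by exists al; split => //; lra.
  exists 2 => s [s0 gs].
  have : `|s *: z| <= g s + `|p|.
    have -> : s *: z = (p + s *: z) - p by rewrite addrC addKr.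
    exact: ler_normB.
  rewrite normrZ nz mulr1 ger0_norm // -g0 => h; lra.
pose e := sup T.
have ale : al <= e by apply: sup_upper_bound => //; split => //; lra.
have ge : g e <= 1.
  rewrite leNgt; apply/negP => hlt.
  have eps0 : 0 < g e - 1 by lra.
  have [t [t0 gt] ht] := sup_adherent eps0 hT.
  have te : t <= e by apply: sup_upper_bound.
  have := gS e t; rewrite ger0_norm; last lra.
  rewrite -/e in ht; lra.
have uS : forall s, p + e *: z + s *: z = p + (e + s) *: z.
  by move=> s; rewrite -addrA -scalerDl.
have nu : `|p + e *: z| = 1.
  apply: le_anti; rewrite ge /=; have := ge1 e; rewrite /g => ->; done.
have [r [mu [r0 [mu0 H]]]] := hcpp _ nu.
have [c [c0 [cr ce]]] : exists c, 0 < c /\ c < r /\ c < e.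
  by case: (lerP r e) => h; [exists (r/2) | exists (e/2)]; lra.
have m1 : (- z) \in (bj_perp (p + e *: z) `&` usphere)%classic.
  rewrite in_setE; split.
    by move=> l; rewrite nu scalerN -scaleNr uS; exact: ge1.
  by rewrite /usphere /= normrN nz.
have m2 : z \in (bj_perp (p + e *: z) `&` usphere)%classic.
  rewrite in_setE; split.
    by move=> l; rewrite nu uS; exact: ge1.
  by rewrite /usphere /= nz.
have gec : g (e - c) <= 1.
  have := conv 0 (e - c) e; rewrite !subr0 g0.
  move=> /(_ ltac:(lra) ltac:(lra)) h.
  rewrite -g0 in h; nra.
have m3 : 1 *: (p + e *: z) + c *: (- z) \in (oball (p + e *: z) r `&` usphere)%classic.
  rewrite in_setE scale1r; split.
    rewrite /oball /= addrAC subrr add0r normrZ normrN nz mulr1 ger0_norm //; lra.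
  rewrite /usphere /= scalerN -scaleNr uS; apply: le_anti.
  by rewrite -/(g _) (ge1 (e + - c)) andbT; rewrite addrC addrC.
have := H (- z) m1 z m2 1 c m3.
rewrite scale1r scalerA uS => h.
have : T (e + c * mu) by split; [apply: addr_ge0; nra | exact: h].
move=> /(sup_upper_bound hT) h2.
have : 0 < c * mu by apply: mulr_gt0.
rewrite -/e in h2; lra.
Qed.

Theorem mainTheorem19 (R : realType) (X : completeNormedModType R) :
  dim_gt1 X ->
  (forall x : X, `|x| = 1 -> CPP x x) ->
  strictly_convex X.
Proof.
move=> _ hcpp x y nx ny xy t t0 t1.
rewrite ltNge; apply/negP => hp.
have d0 : x - y != 0 by rewrite subr_eq0; apply/eqP.
have nd0 : 0 < `|x - y| by rewrite normr_gt0.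
have ndn : `|x - y| != 0 by rewrite gt_eqF.
have [ex ey] := vec_id _ _ x y t.
apply: (@key R X (t *: x + (1 - t) *: y) (`|x - y|^-1 *: (x - y))
          ((1 - t) * `|x - y|) (t * `|x - y|)) => //.
- exact: normfZV.
- by apply: mulr_gt0 => //; lra.
- exact: mulr_gt0.
- by rewrite scalerA mulfK // ex nx.
- by rewrite scalerA mulNr mulfK // ey ny.
Qed.
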